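(* Let $p$ be a prime, $0<\alpha\le1$, and let $S\subseteq\mathbb{Z}_p$ have the property that all pairwise sums of different elements of $S$ are distinct (i.e., if $s_1,s_2,s_3,s_4\in S$ with $s_1\neq s_2$, $s_3\neq s_4$ and $s_1+s_2=s_3+s_4$ in $\mathbb{Z}_p$, then $\{s_1,s_2\}=\{s_3,s_4\}$). Then $$\mathcal{C}^{\mathrm{bsgs1}}_\alpha(S)>(\alpha|S|/\sqrt2)^{2/3}.$$
   Context: The BSGS-1 $\alpha$-complexity $\mathcal{C}^{\mathrm{bsgs1}}_\alpha(S)$ of $S\subseteq\mathbb{Z}_p$ is the smallest integer $n$ such that there exist $X,Y\subseteq\mathbb{Z}_p$ with $|X|=|Y|=n$ and $|S\cap(X-Y)|\geq\alpha|S|$, where $X-Y=\{x-y\mid x\in X,y\in Y\}$ (computed in $\mathbb{Z}_p$). *)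

(* Defs.v *)
From Stdlib Require Import Reals.
From mathcomp Require Import all_boot all_order all_algebra.
Set Implicit Arguments. Unset Strict Implicit. Unset Printing Implicit Defensive.
Import GRing.Theory.

Definition diffset (p : nat) (X Y : {set 'F_p}) : {set 'F_p} :=
  [set (x - y)%R | x in X, y in Y].

Definition bsgs1_ok (p : nat) (alpha : R) (S : {set 'F_p}) (n : nat) : bool :=
  [exists X : {set 'F_p}, exists Y : {set 'F_p},
     [&& #|X| == n, #|Y| == n &
        (if Rle_dec (Rmult alpha (INR #|S|)) (INR #|S :&: diffset X Y|)
         then true else false)]].

Lemma bsgs1_ex (p : nat) (alpha : R) (S : {set 'F_p}) :
  exists n, bsgs1_ok alpha S n || (n > #|'F_p|)%N.
Proof. exists (#|'F_p|.+1); by rewrite ltnSn orbT. Qed.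

(* The
   disjunct (n > #|'F_p|) only makes the minimum total; for 0 < alpha <= 1
   the condition holds at n = #|'F_p| (X = Y = whole group), so it never
   affects the value. *)
Definition C_bsgs1 (p : nat) (alpha : R) (S : {set 'F_p}) : nat :=
  ex_minn (bsgs1_ex alpha S).

Definition distinct_pair_sums (p : nat) (S : {set 'F_p}) : Prop :=
  forall s1 s2 s3 s4, s1 \in S -> s2 \in S -> s3 \in S -> s4 \in S ->
    s1 != s2 -> s3 != s4 -> (s1 + s2 = s3 + s4)%R ->
    [set s1; s2] = [set s3; s4].

(* Main.v *)
Require Import Defs.
From Stdlib Require Import Reals.
From mathcomp Require Import all_boot all_order all_algebra.
From Stdlib Require Import Lra.
From mathcomp Require Import zify ring.
Set Implicit Arguments. Unset Strict Implicit. Unset Printing Implicit Defensive.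
Import GRing.Theory.

Lemma amgm (a b : nat) : 2 * (a * b) <= a ^ 2 + b ^ 2.
Proof. have [h|h] := leqP a b.
 - rewrite -(subnKC h). set k := b - a. nia.
 - rewrite -(subnKC (ltnW h)). set k := a - b. nia. Qed.

Lemma CS_nat (T : finType) (A : {pred T}) (f : T -> nat) :
  (\sum_(i in A) f i) ^ 2 <= #|A| * \sum_(i in A) f i ^ 2.
Proof.
have E : (\sum_(i in A) f i) ^ 2 = \sum_(i in A) \sum_(j in A) f i * f j.
  rewrite expnS expn1 big_distrl /=; apply: eq_bigr => i _; by rewrite big_distrr.
rewrite -(leq_pmul2l (isT : 0 < 2)) E big_distrr /=.
set s := \sum_(i in A) f i ^ 2.
have -> : 2 * (#|A| * s) =
   \sum_(i in A) \sum_(j in A) (f i ^ 2 + f j ^ 2).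
  transitivity (\sum_(i in A) (#|A| * f i ^ 2 + s)).
    by rewrite big_split /= sum_nat_const -big_distrr /=; lia.
  apply: eq_bigr => i _; by rewrite big_split /= sum_nat_const.
apply: leq_sum => i _; rewrite big_distrr /=; apply: leq_sum => j _; exact: amgm.
Qed.

Lemma c4_count (T : finType) (X Y : {set T}) (P : {set T * T}) :
  P \subset setX X Y ->
  (forall x1 x2 y1 y2, (x1,y1) \in P -> (x1,y2) \in P -> (x2,y1) \in P ->
      (x2,y2) \in P -> x1 = x2 \/ y1 = y2) ->
  #|P| ^ 2 <= #|Y| * (#|P| + #|X| * (#|X| - 1)).
Proof.
move=> sPXY c4.
pose a x y : nat := ((x, y) \in P).
pose d y := \sum_x a x y.
have inP x y : (x, y) \in P -> (x \in X) && (y \in Y).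
  by move=> h; have := subsetP sPXY _ h; rewrite in_setX.
have cardP : #|P| = \sum_x \sum_y a x y.
  rewrite -sum1_card big_mkcond /= pair_bigA /=.
  by apply: eq_bigr => -[x y] _.
have tE : #|P| = \sum_y d y by rewrite cardP exchange_big.
have dY y : y \notin Y -> d y = 0.
  move=> nY; apply: big1 => x _; rewrite /a; case h: ((x, y) \in P) => //.
  by move: (inP _ _ h); rewrite (negbTE nY) andbF.
have sumY (F : nat -> nat) : F 0 = 0 -> \sum_y F (d y) = \sum_(y in Y) F (d y).
  move=> F0; rewrite (bigID (mem Y)) /= [Z in _ + Z]big1 ?addn0 // => y nY.
  by rewrite dY.
have tY : #|P| = \sum_(y in Y) d y by rewrite tE (sumY id).
have sq : \sum_(y in Y) d y ^ 2 <= #|P| + #|X| * (#|X| - 1).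
  rewrite -(sumY (fun k => k ^ 2)) //.
  have -> : \sum_y d y ^ 2 = \sum_x1 \sum_x2 \sum_y a x1 y * a x2 y.
    transitivity (\sum_y \sum_x1 \sum_x2 a x1 y * a x2 y).
      apply: eq_bigr => y _; rewrite /d expnS expn1 big_distrl /=.
      by apply: eq_bigr => x1 _; rewrite big_distrr.
    rewrite exchange_big; apply: eq_bigr => x1 _; exact: exchange_big.
  have cnt (b : T -> bool) : \sum_y (b y : nat) = #|[set y | b y]|.
    by rewrite -sum1dep_card [RHS]big_mkcond /=; apply: eq_bigr => y _; case: (b y).
  have off x1 x2 : x2 != x1 -> \sum_y a x1 y * a x2 y <= (x1 \in X) * (x2 \in X).
    move=> ne.
    case hX: ((x1 \in X) && (x2 \in X)); last first.
      rewrite big1 // => y _; rewrite /a mulnb.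
      case h1: ((x1, y) \in P) => //; case h2: ((x2, y) \in P) => //.
      by move: (inP _ _ h1) (inP _ _ h2) hX => /andP[-> _] /andP[-> _].
    rewrite mulnb hX.
    under eq_bigr => y _ do rewrite /a mulnb.
    rewrite cnt; apply/card_le1_eqP => y y'; rewrite !inE => /andP[h1 h2] /andP[h1' h2'].
    have [e|//] := c4 x1 x2 y y' h1 h1' h2 h2'.
    by rewrite e eqxx in ne.
  have HX : #|X| * (#|X| - 1) = \sum_x1 (x1 \in X) * (#|X| - 1).
    rewrite -big_distrl /=; congr (_ * _).
    by rewrite -sum1_card big_mkcond /=; apply: eq_bigr => x _; case: (x \in X).
  rewrite cardP HX -big_split /=.
  apply: leq_sum => x1 _; rewrite (bigD1 x1) //=.
  apply: leq_add.
    by rewrite leq_eqVlt; apply/orP; left; apply/eqP; apply: eq_bigr => y _; rewrite /a; case: (_ \in P).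
  apply: (@leq_trans (\sum_(x2 | x2 != x1) (x1 \in X) * (x2 \in X))).
    by apply: leq_sum => x2 ne; exact: off.
  rewrite -big_distrr /=.
  case x1X: (x1 \in X); last by rewrite !mul0n.
  rewrite !mul1n (cardD1 x1 X) x1X add1n subSS subn0.
  have -> : \sum_(x2 | x2 != x1) (x2 \in X : nat) = \sum_(x2 | (x2 != x1) && (x2 \in X)) 1.
    by rewrite [RHS]big_mkcondr; apply: eq_bigr => x _; case: (x \in X).
  rewrite sum1dep_card; apply: eq_leq; apply: eq_card => z; by rewrite !inE.
apply: leq_trans (leq_mul (leqnn _) sq).
by rewrite tY; apply: CS_nat.
Qed.
Local Open Scope R_scope.
Lemma real_part (a : R) (n : nat) : 0 < a -> a ^ 2 < INR n ^ 3 ->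
  Rpower a (2 / 3) < INR n.
Proof.
move=> a0 h.
have b3 : Rpower a (2/3) ^ 3 = a ^ 2.
  rewrite -(Rpower_pow 3); last by apply: exp_pos.
  rewrite Rpower_mult -(Rpower_pow 2 _ a0); congr Rpower; simpl; lra.
have bpos : 0 < Rpower a (2/3) by apply: exp_pos.
destruct (Rlt_or_le (Rpower a (2/3)) (INR n)) as [H|H] => //.
have : INR n ^ 3 <= Rpower a (2/3) ^ 3 by apply: pow_incr; split => //; apply: pos_INR.
lra.
Qed.

Local Close Scope R_scope.
Lemma nat_part (t n : nat) : (0 < t)%N -> (t ^ 2 <= n * (t + n * (n - 1)))%N ->
  (t * t < 2 * n ^ 3)%N.
Proof.
move=> t0; case: n => [|m]; first by rewrite mul0n; lia.
rewrite subSS subn0 => h.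
have h' : (t * t + (m.+1) * (m.+1) <= (m.+1) ^ 3 + m.+1 * t)%N by nia.
rewrite ltnNge; apply/negP => h2.
have h3 : (m.+1 * m.+1 + m.+1 <= t)%N by nia.
nia.
Qed.

Lemma Fp_id (p : nat) (x1 x2 y1 y2 : 'F_p) :
  ((x1 - y1) + (x2 - y2) = (x1 - y2) + (x2 - y1))%R.
Proof. ring. Qed.

Lemma comb_part (p : nat) (S X Y : {set 'F_p}) :
  distinct_pair_sums S ->
  (#|S :&: diffset X Y| ^ 2 <= #|Y| * (#|S :&: diffset X Y| + #|X| * (#|X| - 1)))%N.
Proof.
move=> sid.
set T := S :&: diffset X Y.
pose g (s : 'F_p) : 'F_p * 'F_p :=
  odflt (0%R, 0%R) [pick u : 'F_p * 'F_p | [&& u.1 \in X, u.2 \in Y & (u.1 - u.2 == s)%R]].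
have gP s : s \in T -> [/\ (g s).1 \in X, (g s).2 \in Y & ((g s).1 - (g s).2)%R = s].
  rewrite inE => /andP[_ /imset2P[x y xX yY ->]].
  rewrite /g; case: pickP => [u /and3P[h1 h2 /eqP h3] //|/(_ (x, y))].
  by rewrite /= xX yY eqxx.
pose P := g @: T.
have cP : #|P| = #|T|.
  apply: card_in_imset => s1 s2 h1 h2 e.
  by have [_ _ <-] := gP _ h1; have [_ _ <-] := gP _ h2; rewrite e.
rewrite -cP; apply: c4_count.
  apply/subsetP => u /imsetP[s sT ->]; have [h1 h2 _] := gP _ sT.
  by move: h1 h2; case: (g s) => a b /= h1 h2; rewrite in_setX h1 h2.
have inv x y : (x, y) \in P -> [/\ (x - y)%R \in T, (x - y)%R \in S & g (x - y)%R = (x, y)].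
  move=> /imsetP[s sT e]; have [_ _ ds] := gP _ sT.
  rewrite -e /= in ds; rewrite ds -e; split=> //.
  by move: sT; rewrite inE => /andP[].
move=> x1 x2 y1 y2 h11 h12 h21 h22.
have [_ S11 g11] := inv _ _ h11; have [_ S12 g12] := inv _ _ h12.
have [_ S21 g21] := inv _ _ h21; have [_ S22 g22] := inv _ _ h22.
case: (eqVneq x1 x2) => [-> |nx]; first by left.
case: (eqVneq y1 y2) => [-> |ny]; first by right.
exfalso.
have d1 : (x1 - y1 != x2 - y2)%R.
  apply/eqP => e; move: g22; rewrite -e g11 => -[e1 _]; by rewrite e1 eqxx in nx.
have d2 : (x1 - y2 != x2 - y1)%R.
  apply/eqP => e; move: g21; rewrite -e g12 => -[e1 _]; by rewrite e1 eqxx in nx.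
have := sid _ _ _ _ S11 S22 S12 S21 d1 d2 (Fp_id x1 x2 y1 y2).
move=> /setP/(_ (x1 - y1)%R); rewrite !inE eqxx /= => /esym /orP[] /eqP e.
- by move/addrI/oppr_inj: e => e; rewrite e eqxx in ny.
- by move/addIr: e => e; rewrite e eqxx in nx.
Qed.

Local Open Scope R_scope.
Theorem theorem6 (p : nat) (alpha : R) (S : {set 'F_p}) :
  prime p -> (0 < #|S|)%N -> Rlt 0 alpha -> Rle alpha 1 -> distinct_pair_sums S ->
  Rlt (Rpower (Rdiv (Rmult alpha (INR #|S|)) (sqrt 2)) (Rdiv 2 3))
      (INR (C_bsgs1 alpha S)).
Proof.
move=> pp S0 a0 a1 sid.
rewrite /C_bsgs1; case: ex_minnP => n hn _.
have SR : (0 < INR #|S|) by apply: lt_0_INR; apply/ltP.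
have aS : (0 < alpha * INR #|S|) by apply: Rmult_lt_0_compat.
suff [t [ht1 ht2]] : exists t : nat, (alpha * INR #|S| <= INR t) /\ (t * t < 2 * n ^ 3)%N.
  apply: real_part.
    apply: Rdiv_lt_0_compat => //; apply: sqrt_lt_R0; lra.
  have s2 : (sqrt 2 * sqrt 2 = 2) by apply: sqrt_sqrt; lra.
  have s2p : (0 < sqrt 2) by apply: sqrt_lt_R0; lra.
  have e : ((alpha * INR #|S| / sqrt 2) ^ 2 = (alpha * INR #|S|) ^ 2 / 2).
    rewrite /Rdiv Rpow_mult_distr pow_inv. have -> : sqrt 2 ^ 2 = 2 by rewrite /= Rmult_1_r s2. by [].
  rewrite e.
  have ht : (INR t * INR t < 2 * INR n ^ 3).
    have e3 : (n ^ 3 = n * (n * n))%N by rewrite !expnS expn0 muln1.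
    have h : INR (t * t) < INR (2 * (n * (n * n))) by apply: lt_INR; apply/ltP; rewrite -e3.
    rewrite !mult_INR in h; simpl in h |- *; lra.
  have hh := Rmult_le_compat _ _ _ _ (Rlt_le _ _ aS) (Rlt_le _ _ aS) ht1 ht1.
  have : (alpha * INR #|S|) ^ 2 = (alpha * INR #|S|) * (alpha * INR #|S|) by rewrite /= Rmult_1_r.
  lra.
case/orP: hn => [|hn].
  case/existsP => X /existsP [Y /and3P[/eqP cX /eqP cY hR]].
  exists #|S :&: diffset X Y|; split.
    by move: hR; case: Rle_dec.
  have t0 : (0 < #|S :&: diffset X Y|)%N.
    rewrite lt0n; apply/negP => /eqP e; move: hR; rewrite e; case: Rle_dec => //= h _.
    apply: (Rlt_not_le _ _ aS); exact: h.
  apply: nat_part => //; have := comb_part X Y sid; by rewrite cX cY.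
exists #|S|; split.
  rewrite -[X in (_ <= X)]Rmult_1_l; apply: Rmult_le_compat_r; lra.
have hS : (#|S| < n)%N by exact: leq_ltn_trans (max_card _) hn.
have n0 : (0 < n)%N by exact: leq_ltn_trans (leq0n _) hS.
apply: leq_trans (ltn_mul hS hS) _; rewrite !expnS expn0 muln1.
exact: leq_trans (leq_pmull _ n0) (leq_pmull _ (isT : (0 < 2)%N)).
Qed.
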